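(* Let $V\subseteq\mathbb N$ with $|V|\ge 2$, and let $\mathrm{Adm}(V)$ be the set of admissible binary trees with root $V$. Then the map $\mathcal E$ sending $T\in\mathrm{Adm}(V)$ to the edge set $\{\{\min X,\max X\}: X \text{ a node of } T\}$ is a bijection from $\mathrm{Adm}(V)$ onto the set of facets of $\Delta_V$. (Its inverse sends a facet $F$ to its decomposition tree, obtained by recursively applying the decomposition $F=F^1\sqcup F^2\sqcup\{\{\min V,\max V\}\}$ of facets into facets $F^1$ of $\Delta_{V(F^1)}$ and $F^2$ of $\Delta_{V(F^2)}$ with $V(F^1)\cup V(F^2)=V$, $V(F^1)\cap V(F^2)=\{\max V(F^1)\}$, $\min V\in V(F^1)$, $\max V\in V(F^2)$.)
   Context: A path $(v_1,\dots,v_k)$ in an edge set is a sequence of distinct vertices with consecutive ones joined by edges; it is forbidden if $k\ge 4$, $v_1=\max(v_1,\dots,v_k)$, $v_k=\max(v_2,\dots,v_k)$, $v_2>v_{k-1}$. For finite $V\subseteq\mathbb N$, $\Delta_V$ is the simplicial complex on $E(K_V)$ whose faces are edge sets containing no forbidden path. A binary tree is a rooted planar tree in which every node has either zero or two (ordered) children; for a non-leaf node $X$ write $X^{(1)}$ for its older and $X^{(2)}$ for its younger child. An admissible binary tree with root $V$ is a binary tree whose nodes are labeled by subsets of $V$, with root labeled $V$, such that every node $X$ has $|X|\ge 2$, the leaves are exactly the nodes with $|X|=2$, and every non-leaf node $X$ satisfies: (a) $\min X\in X^{(1)}\setminus X^{(2)}$; (b) $\max X\in X^{(2)}\setminus X^{(1)}$;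 (c) $X^{(1)}\cup X^{(2)}=X$; (d) $X^{(1)}\cap X^{(2)}=\{\max X^{(1)}\}$. *)

(* Defs.v *)
From mathcomp Require Import all_boot all_order.
From mathcomp Require Import finmap.
Set Implicit Arguments. Unset Strict Implicit. Unset Printing Implicit Defensive.
Local Open Scope fset_scope.

(* Maximum / minimum of a finite set of naturals (meaningful for nonempty X). *)
Definition fmax (X : {fset nat}) : nat := \max_(x <- X) x.
Definition fmin (X : {fset nat}) : nat := \big[minn/fmax X]_(x <- X) x.

(* An edge {a,b} (a <> b) is represented as the ordered pair (min, max). *)
Definition edge_of (a b : nat) : nat * nat := (minn a b, maxn a b).

Definition is_path (F : {fset nat * nat}) (p : seq nat) : bool :=
  uniq p && (if p is x :: s then path (fun a b => edge_of a b \in F) x s else true).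

(* Forbidden path: k >= 4, v_1 = max(v_1..v_k), v_k = max(v_2..v_k),
   v_2 > v_{k-1}. *)
Definition forbidden (F : {fset nat * nat}) (p : seq nat) : Prop :=
  is_path F p /\ 4 <= size p /\
  nth 0 p 0 = \max_(x <- p) x /\
  nth 0 p (size p).-1 = \max_(x <- behead p) x /\
  nth 0 p (size p).-2 < nth 0 p 1.

Definition edges_of_KV (V : {fset nat}) (F : {fset nat * nat}) : Prop :=
  forall e, e \in F -> [/\ e.1 < e.2, e.1 \in V & e.2 \in V].

Definition face (V : {fset nat}) (F : {fset nat * nat}) : Prop :=
  edges_of_KV V F /\ forall p, ~ forbidden F p.

Definition facet (V : {fset nat}) (F : {fset nat * nat}) : Prop :=
  face V F /\ forall G, face V G -> F `<=` G -> G = F.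

(* Binary trees (every node has 0 or 2 ordered children), labelled by
   finite sets of naturals.  In [Node X t1 t2], t1 is the older child X^(1)
   and t2 the younger child X^(2). *)
Inductive btree : Type :=
| Leaf : {fset nat} -> btree
| Node : {fset nat} -> btree -> btree -> btree.

Definition label (t : btree) : {fset nat} :=
  match t with Leaf X => X | Node X _ _ => X end.

Fixpoint nodes (t : btree) : seq {fset nat} :=
  match t with
  | Leaf X => [:: X]
  | Node X t1 t2 => X :: nodes t1 ++ nodes t2
  end.

Fixpoint adm_nodes (t : btree) : Prop :=
  match t with
  | Leaf X => #|` X| = 2
  | Node X t1 t2 =>
      let X1 := label t1 in let X2 := label t2 in
      (2 <= #|` X|) /\ (#|` X| <> 2) /\
      (fmin X \in X1) /\ (fmin X \notin X2) /\
      (fmax X \in X2) /\ (fmax X \notin X1) /\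
      (X1 `|` X2 = X) /\
      (X1 `&` X2 = [fset fmax X1]) /\
      adm_nodes t1 /\ adm_nodes t2
  end.

Definition admissible (V : {fset nat}) (t : btree) : Prop :=
  label t = V /\ (forall X, X \in nodes t -> X `<=` V) /\ adm_nodes t.

Definition edgeset (t : btree) : {fset nat * nat} :=
  [fset (fmin X, fmax X) | X in nodes t].

(* Main.v *)
Require Import Defs.
From mathcomp Require Import all_boot all_order.
From mathcomp Require Import finmap.
From mathcomp Require Import zify.
From Stdlib Require Import ClassicalEpsilon.
Set Implicit Arguments. Unset Strict Implicit. Unset Printing Implicit Defensive.
Local Open Scope fset_scope.

Lemma bigmax_le (s : seq nat) m : (forall x, x \in s -> x <= m) -> \max_(x <- s) x <= m.
Proof. by move=> H; apply/bigmax_leqP_seq => i /H. Qed.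

Lemma bigmax_ge (s : seq nat) u : u \in s -> u <= \max_(x <- s) x.
Proof. by move=> us; exact: (leq_bigmax_seq u). Qed.

Lemma bigmax_seq_eq (s : seq nat) u : u \in s -> (forall x, x \in s -> x <= u) ->
  \max_(x <- s) x = u.
Proof.
move=> us H; apply/eqP; rewrite eqn_leq; apply/andP; split.
  exact: bigmax_le.
exact: bigmax_ge.
Qed.

Lemma bigmax_mem (s : seq nat) : s != [::] -> \max_(x <- s) x \in s.
Proof.
elim: s => // h t IH _; rewrite big_cons.
case: t IH => [|h' t'] IH.
  by rewrite big_nil maxn0 mem_head.
rewrite /maxn; case: ifP => _; last by rewrite mem_head.
by rewrite inE; apply/orP; right; exact: IH.
Qed.

Lemma bigmin_le (s : seq nat) d x : x \in s -> \big[minn/d]_(y <- s) y <= x.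
Proof.
elim: s => // h t IH; rewrite inE big_cons => /orP[/eqP->|xt].
  exact: geq_minl.
exact: leq_trans (geq_minr _ _) (IH xt).
Qed.

Lemma bigmin_mem (s : seq nat) d : \big[minn/d]_(y <- s) y \in d :: s.
Proof.
elim: s => [|h t IH]; first by rewrite big_nil mem_head.
rewrite big_cons /minn; case: ifP => _; first by rewrite !inE eqxx orbT.
by move: IH; rewrite !inE => /orP[->//|->]; rewrite !orbT.
Qed.

Lemma fmax_ge X x : x \in X -> x <= fmax X.
Proof. exact: bigmax_ge. Qed.

Lemma fmax_mem X x : x \in X -> fmax X \in X.
Proof.
move=> xX; apply: bigmax_mem; move: xX.
have -> : (x \in X) = (x \in (X : seq nat)) by [].
by case: (X : seq nat).
Qed.

Lemma fmax_eq X u : u \in X -> (forall x, x \in X -> x <= u) -> fmax X = u.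
Proof. exact: bigmax_seq_eq. Qed.

Lemma fmin_le X x : x \in X -> fmin X <= x.
Proof. exact: bigmin_le. Qed.

Lemma fmin_mem X x : x \in X -> fmin X \in X.
Proof.
move=> xX; have H : fmin X \in fmax X :: (X : seq nat) := bigmin_mem X (fmax X).
move: H; rewrite inE => /orP[/eqP->|//].
exact: fmax_mem xX.
Qed.

Lemma fmin_eq X u : u \in X -> (forall x, x \in X -> u <= x) -> fmin X = u.
Proof.
move=> uX H; apply/eqP; rewrite eqn_leq fmin_le //=.
apply: H; exact: fmin_mem uX.
Qed.

Lemma card2_other (X : {fset nat}) (y : nat) : 2 <= #|` X| -> exists2 x, x \in X & x != y.
Proof.
move=> H; case: (boolP (X `<=` [fset y])) => [S|].
  by have := fsubset_leq_card S; rewrite cardfs1; lia.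
by case/fsubsetPn => x xX; rewrite inE => ?; exists x.
Qed.

Lemma fmin_lt_fmax X : 2 <= #|` X| -> fmin X < fmax X.
Proof.
move=> H; have [x xX nx] := card2_other (fmin X) H.
have := fmin_le xX; have := fmax_ge xX; lia.
Qed.

Lemma card2_mem X x : #|` X| = 2 -> x \in X -> x = fmin X \/ x = fmax X.
Proof.
move=> H xX.
have S : [fset fmin X; fmax X] `<=` X.
  by apply/fsubsetP => z; rewrite !inE => /orP[]/eqP->; [exact: fmin_mem xX|exact: fmax_mem xX].
have lt := fmin_lt_fmax (eq_leq (esym H)).
have : [fset fmin X; fmax X] == X.
  rewrite eqEfcard S /= cardfs2 H; by case: eqP => // E; rewrite E ltnn in lt.
move/eqP => E; move: xX; rewrite -{1}E !inE => /orP[]/eqP ->; [by left|by right].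
Qed.


Lemma in_edgeset t e :
  reflect (exists2 X, X \in nodes t & e = (fmin X, fmax X)) (e \in edgeset t).
Proof.
apply: (iffP idP) => [/imfsetP [X XX ->]|[X XX ->]]; first by exists X.
by apply/imfsetP; exists X.
Qed.

Lemma edgeset_leaf X e : (e \in edgeset (Leaf X)) = (e == (fmin X, fmax X)).
Proof.
apply/in_edgeset/eqP => [[Y]|->]; last by exists X; rewrite ?inE.
by rewrite inE => /eqP -> ->.
Qed.

Lemma edgeset_node X t1 t2 e : (e \in edgeset (Node X t1 t2)) =
  [|| e == (fmin X, fmax X), e \in edgeset t1 | e \in edgeset t2].
Proof.
apply/in_edgeset/idP => [[Y]|].
  rewrite /= inE mem_cat => /orP[/eqP -> ->|/orP[YY|YY] ->]; first by rewrite eqxx.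
    by apply/orP; right; apply/orP; left; apply/in_edgeset; exists Y.
  by apply/orP; right; apply/orP; right; apply/in_edgeset; exists Y.
case/orP => [/eqP ->|/orP[/in_edgeset[Y YY ->]|/in_edgeset[Y YY ->]]].
- by exists X; rewrite //= inE eqxx.
- by exists Y; rewrite //= inE mem_cat YY orbT.
- by exists Y; rewrite //= inE mem_cat YY !orbT.
Qed.

Lemma label_in_nodes t : label t \in nodes t.
Proof. by case: t => [X|X t1 t2] /=; rewrite inE eqxx. Qed.

Lemma root_edge t : (fmin (label t), fmax (label t)) \in edgeset t.
Proof. by apply/in_edgeset; exists (label t) => //; exact: label_in_nodes. Qed.

Section NodeFacts.
Context {X : {fset nat}} {t1 t2 : btree}.
Hypothesis H : adm_nodes (Node X t1 t2).
Let X1 := label t1.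
Let X2 := label t2.

Lemma nf_card : 2 < #|` X|.
Proof. by case: H => [h1 [h2 _]]; lia. Qed.
Lemma nf_minX1 : fmin X \in X1.
Proof. by case: H => [_ [_ [h _]]]. Qed.
Lemma nf_minX2 : fmin X \notin X2.
Proof. by case: H => [_ [_ [_ [h _]]]]. Qed.
Lemma nf_maxX2 : fmax X \in X2.
Proof. by case: H => [_ [_ [_ [_ [h _]]]]]. Qed.
Lemma nf_maxX1 : fmax X \notin X1.
Proof. by case: H => [_ [_ [_ [_ [_ [h _]]]]]]. Qed.
Lemma nf_U : X1 `|` X2 = X.
Proof. by case: H => [_ [_ [_ [_ [_ [_ [h _]]]]]]]. Qed.
Lemma nf_I : X1 `&` X2 = [fset fmax X1].
Proof. by case: H => [_ [_ [_ [_ [_ [_ [_ [h _]]]]]]]]. Qed.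
Lemma nf_adm1 : adm_nodes t1.
Proof. by case: H => [_ [_ [_ [_ [_ [_ [_ [_ [h _]]]]]]]]]. Qed.
Lemma nf_adm2 : adm_nodes t2.
Proof. by case: H => [_ [_ [_ [_ [_ [_ [_ [_ [_ h]]]]]]]]]. Qed.

Lemma nf_sub1 x : x \in X1 -> x \in X.
Proof. by move=> h; rewrite -nf_U inE h. Qed.
Lemma nf_sub2 x : x \in X2 -> x \in X.
Proof. by move=> h; rewrite -nf_U inE h orbT. Qed.
Lemma nf_cover x : x \in X -> (x \in X1) || (x \in X2).
Proof. by rewrite -nf_U inE. Qed.
Lemma nf_inter x : x \in X1 -> x \in X2 -> x = fmax X1.
Proof.
move=> h1 h2; have : x \in X1 `&` X2 by rewrite inE h1 h2.
by rewrite nf_I inE => /eqP.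
Qed.
Lemma nf_m1 : fmax X1 \in X1.
Proof. exact: fmax_mem nf_minX1. Qed.
Lemma nf_m2 : fmax X1 \in X2.
Proof. have : fmax X1 \in X1 `&` X2 by rewrite nf_I fset11. by rewrite in_fsetI => /andP[]. Qed.
Lemma nf_fmin1 : fmin X1 = fmin X.
Proof. apply: fmin_eq; first exact: nf_minX1. by move=> x /nf_sub1; exact: fmin_le. Qed.
Lemma nf_fmax2 : fmax X2 = fmax X.
Proof. apply: fmax_eq; first exact: nf_maxX2. by move=> x /nf_sub2; exact: fmax_ge. Qed.
Lemma nf_am : fmin X < fmax X1.
Proof.
have h : fmin X <= fmax X1 by apply: fmin_le; apply: nf_sub1; exact: nf_m1.
rewrite ltn_neqAle h andbT; apply/eqP => E.
by have := nf_minX2; rewrite E nf_m2.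
Qed.
Lemma nf_mb : fmax X1 < fmax X.
Proof.
have h : fmax X1 <= fmax X by apply: fmax_ge; apply: nf_sub1; exact: nf_m1.
rewrite ltn_neqAle h andbT; apply/eqP => E.
by have := nf_maxX1; rewrite -E nf_m1.
Qed.
Lemma nf_le1 x : x \in X1 -> x <= fmax X1.
Proof. exact: fmax_ge. Qed.
Lemma nf_ge2 x : x \in X2 -> fmin X < x.
Proof.
move=> h; rewrite ltn_neqAle fmin_le ?andbT; last exact: nf_sub2.
by apply/eqP => E; have := nf_minX2; rewrite E h.
Qed.
End NodeFacts.

Lemma adm_nodes_sub t : adm_nodes t -> forall Y, Y \in nodes t -> Y `<=` label t.
Proof.
elim: t => [X|X t1 IH1 t2 IH2] H Y; first by rewrite /= inE => /eqP ->.
rewrite /= inE mem_cat => /orP[/eqP ->//|/orP[YY|YY]].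
  apply: fsubset_trans (IH1 (nf_adm1 H) _ YY) _.
  apply/fsubsetP => x; exact: (@nf_sub1 X t1 t2 H x). 
apply: fsubset_trans (IH2 (nf_adm2 H) _ YY) _.
apply/fsubsetP => x hx. have := nf_sub2 H hx. done.
Qed.

Lemma adm_nodes_card t : adm_nodes t -> forall Y, Y \in nodes t -> 2 <= #|` Y|.
Proof.
elim: t => [X|X t1 IH1 t2 IH2] H Y; first by rewrite /= inE => /eqP ->; rewrite H.
rewrite /= inE mem_cat => /orP[/eqP ->|/orP[YY|YY]].
- exact: ltnW (nf_card H).
- exact: (IH1 (nf_adm1 H)).
- exact: (IH2 (nf_adm2 H)).
Qed.

Lemma adm_card t : adm_nodes t -> 2 <= #|` label t|.
Proof. move=> H; apply: (adm_nodes_card H); exact: label_in_nodes. Qed.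

Lemma adm_edge t e : adm_nodes t -> e \in edgeset t ->
  [/\ e.1 < e.2, e.1 \in label t & e.2 \in label t].
Proof.
move=> H /in_edgeset [Y YY ->] /=.
have c := adm_nodes_card H YY; have s := adm_nodes_sub H YY.
have [y yY _] := card2_other 0 c.
split; first exact: fmin_lt_fmax.
- by apply: (fsubsetP s); exact: fmin_mem yY.
- by apply: (fsubsetP s); exact: fmax_mem yY.
Qed.

Lemma edgeset_nodeE X t1 t2 :
  edgeset (Node X t1 t2) = (fmin X, fmax X) |` (edgeset t1 `|` edgeset t2).
Proof. by apply/fsetP => e; rewrite edgeset_node !inE orbA. Qed.

Lemma arith1 (x y z : nat) : 1 < y -> 1 < x -> (z + 1 = x + y)%N ->
  (1 + (2 * x - 3 + (2 * y - 3) - 0))%N = (2 * z - 3)%N.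
Proof. lia. Qed.

Lemma card_edgeset t : adm_nodes t -> #|` edgeset t| = (2 * #|` label t| - 3)%N.
Proof.
elim: t => [X|X t1 IH1 t2 IH2] H.
  have -> : edgeset (Leaf X) = [fset (fmin X, fmax X)].
    by apply/fsetP => e; rewrite edgeset_leaf inE.
  by rewrite cardfs1 /= H.
have H1 := nf_adm1 H; have H2 := nf_adm2 H.
rewrite edgeset_nodeE cardfsU1 cardfsU (IH1 H1) (IH2 H2).
have -> : (fmin X, fmax X) \notin edgeset t1 `|` edgeset t2.
  rewrite inE; apply/negP => /orP[] /[dup] E.
    case/(adm_edge H1) => _ _ /= h; by have := nf_maxX1 H; rewrite h.
  case/(adm_edge H2) => _ /= h _; by have := nf_minX2 H; rewrite h.
have -> : edgeset t1 `&` edgeset t2 = fset0.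
  apply/fsetP => e; rewrite !inE; apply/negP => /andP[E1 E2].
  case: (adm_edge H1 E1) => lt a1 b1; case: (adm_edge H2 E2) => _ a2 b2.
  have := nf_inter H a1 a2; have := nf_inter H b1 b2; lia.
rewrite cardfs0 /=.
have := cardfsUI (label t1) (label t2); rewrite (nf_U H) (nf_I H) cardfs1 /=.
have := adm_card H1; have := adm_card H2.
by apply: arith1.
Qed.


Definition er (E : {fset nat * nat}) := fun x y => edge_of x y \in E.
Definition er2 (E1 E2 : {fset nat * nat}) :=
  fun x y => (edge_of x y \in E1) || (edge_of x y \in E2).

Lemma edge_of_sym x y : edge_of x y = edge_of y x.
Proof. by rewrite /edge_of minnC maxnC. Qed.

Lemma edge_mem (P : pred nat) x y :
  P (edge_of x y).1 -> P (edge_of x y).2 -> P x /\ P y.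
Proof. by rewrite /edge_of /= /minn /maxn; case: ltnP. Qed.

Lemma edge_lt x y : (edge_of x y).1 <= (edge_of x y).2.
Proof. by rewrite /edge_of /= geq_min leq_max leqnn. Qed.

Section Stay.
Variables (Ei Ej : {fset nat * nat}) (Xi Xj : {fset nat}) (m : nat).
Hypothesis hi : forall e, e \in Ei -> (e.1 \in Xi) && (e.2 \in Xi).
Hypothesis hj : forall e, e \in Ej -> (e.1 \in Xj) && (e.2 \in Xj).
Hypothesis hI : forall x, x \in Xi -> x \in Xj -> x = m.

Lemma er2_side x y : er2 Ei Ej x y -> x \in Xi -> x != m -> er Ei x y /\ y \in Xi.
Proof.
move=> /orP[E|E] xi xm.
  split=> //; have /andP[a b] := hi E.
  by have [] := edge_mem (P := fun z => z \in Xi) a b.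
have /andP[a b] := hj E; have [xj _] := edge_mem (P := fun z => z \in Xj) a b.
by move: xm; rewrite (hI xi xj) eqxx.
Qed.

Lemma stay s x : path (er2 Ei Ej) x s -> x \in Xi -> x != m -> m \notin s ->
  path (er Ei) x s && all (fun y => y \in Xi) s.
Proof.
elim: s x => [//|y s IH] x /= /andP[exy ps] xi xm.
rewrite inE negb_or => /andP[my ms].
have [e yi] := er2_side exy xi xm.
have ym : y != m by rewrite eq_sym.
have := IH y ps yi ym ms => /andP[-> ->].
by rewrite e yi.
Qed.
End Stay.

Lemma er2C E1 E2 x y : er2 E1 E2 x y = er2 E2 E1 x y.
Proof. by rewrite /er2 orbC. Qed.

Lemma path_er2C E1 E2 x s : path (er2 E1 E2) x s = path (er2 E2 E1) x s.
Proof. by apply: eq_path => u v; exact: er2C. Qed.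

Lemma last_in (P : pred nat) x s : P x -> all P s -> P (last x s).
Proof. by elim: s x => //= y s IH x _ /andP[py ps]; exact: IH. Qed.

Section Glue.
Variables (E1 E2 : {fset nat * nat}) (X1 X2 : {fset nat}) (m : nat).
Hypothesis h1 : forall e, e \in E1 -> (e.1 \in X1) && (e.2 \in X1).
Hypothesis h2 : forall e, e \in E2 -> (e.1 \in X2) && (e.2 \in X2).
Hypothesis hI : forall x, x \in X1 -> x \in X2 -> x = m.
Hypothesis hm : forall x, x \in X1 -> x <= m.

Let hI' x : x \in X2 -> x \in X1 -> x = m.
Proof. by move=> a b; exact: hI. Qed.

Lemma er2_in x y : er2 E1 E2 x y -> (x \in X1) || (x \in X2).
Proof.
move=> /orP[E|E].
  have /andP[a b] := h1 E; by have [-> _] := edge_mem (P := fun z => z \in X1) a b.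
have /andP[a b] := h2 E; have [-> _] := edge_mem (P := fun z => z \in X2) a b.
by rewrite orbT.
Qed.

Lemma er2_in2 x y : er2 E1 E2 x y -> (y \in X1) || (y \in X2).
Proof.
move=> /orP[E|E].
  have /andP[a b] := h1 E; by have [_ ->] := edge_mem (P := fun z => z \in X1) a b.
have /andP[a b] := h2 E; have [_ ->] := edge_mem (P := fun z => z \in X2) a b.
by rewrite orbT.
Qed.

Lemma stay_any s x : path (er2 E1 E2) x s -> s != [::] -> x != m -> m \notin s ->
  (path (er E1) x s && all (fun y => y \in X1) s) \/
  (path (er E2) x s && all (fun y => y \in X2) s).
Proof.
case: s => [//|y s] /= /andP[exy ps] _ xm ms.
have := er2_in exy => /orP[xi|xi].
  by left; apply: (stay h1 h2 hI _ xi xm ms); rewrite /= exy ps.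
by right; apply: (stay h2 h1 hI' _ xi xm ms); rewrite /= er2C exy path_er2C ps.
Qed.

Lemma glue v1 s : uniq (v1 :: s) -> path (er2 E1 E2) v1 s -> s != [::] ->
  (forall x, x \in v1 :: s -> x <= v1) -> (forall x, x \in s -> x <= last v1 s) ->
  path (er E1) v1 s \/ path (er E2) v1 s.
Proof.
move=> U P ne Hmax Hlast.
case: (boolP (m \in v1 :: s)) => [mp|mp]; last first.
  move: mp; rewrite inE negb_or eq_sym => /andP[v1m ms].
  case: (stay_any P ne v1m ms) => /andP[-> _]; by [left|right].
case: (eqVneq v1 m) => [ev1|v1m].
  subst v1; case: s U P ne Hmax Hlast mp => [//|y s] U P _ Hmax Hlast _.
  move: U => /= /andP[]; rewrite inE negb_or => /andP[my ms] /andP[ys _].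
  move: P => /= /andP[emy ps].
  have yin := er2_in2 emy.
  case/orP: yin => yi.
    have hy : y != m by rewrite eq_sym.
    have /andP[ps' _] := stay h1 h2 hI ps yi hy ms.
    left; rewrite /= ps' andbT.
    move: emy => /orP[//|E]; have /andP[a b] := h2 E.
    have [_ y2] := edge_mem (P := fun z => z \in X2) a b.
    by move: hy; rewrite (hI yi y2) eqxx.
  have hy : y != m by rewrite eq_sym.
  have ps2 : path (er2 E2 E1) y s by rewrite path_er2C.
  have /andP[ps' _] := stay h2 h1 hI' ps2 yi hy ms.
  right; rewrite /= ps' andbT.
  move: emy => /orP[E|//]; have /andP[a b] := h1 E.
  have [_ y1] := edge_mem (P := fun z => z \in X1) a b.
  by move: hy; rewrite (hI y1 yi) eqxx.
have ms : m \in s by move: mp; rewrite inE eq_sym (negbTE v1m).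
move: U P Hmax Hlast ne; case/splitPr: ms => A B U P Hmax Hlast _.
move: P; rewrite cat_path /= => /andP[pA /andP[elm pB]].
have mA : m \notin v1 :: A.
  by move: U; rewrite -cat_cons cat_uniq /= => /and3P[_ /norP[] ].
have mA' : m \notin A by move: mA; rewrite inE negb_or => /andP[].
have mB : m \notin B.
  by move: U; rewrite -cat_cons cat_uniq /= => /and4P[].
have lastA : last v1 A != m.
  by apply: contraNneq mA => <-; exact: mem_last.
have seg1 : (path (er E1) v1 (rcons A m) && (v1 \in X1) && (last v1 A \in X1) && (last v1 A != m)) ||
            (path (er E2) v1 (rcons A m) && (v1 \in X2) && (last v1 A \in X2) && (last v1 A != m)).
  have v1in : (v1 \in X1) || (v1 \in X2).
    case: A pA elm {mA mA' lastA U Hmax Hlast} => [_|a A] /=; first exact: er2_in.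
    by case/andP => e _ _; exact: er2_in e.
  case/orP: v1in => vi.
    have /andP[pA' allA] := stay h1 h2 hI pA vi v1m mA'.
    have li : last v1 A \in X1 by apply: (last_in (P := fun z => z \in X1)).
    have [e _] := er2_side h1 h2 hI elm li lastA.
    by rewrite rcons_path pA' e vi li lastA.
  have pA2 : path (er2 E2 E1) v1 A by rewrite path_er2C.
  have /andP[pA' allA] := stay h2 h1 hI' pA2 vi v1m mA'.
  have li : last v1 A \in X2 by apply: (last_in (P := fun z => z \in X2)).
  have elm2 : er2 E2 E1 (last v1 A) m by rewrite er2C.
  have [e _] := er2_side h2 h1 hI' elm2 li lastA.
  by rewrite !rcons_path pA' e vi li lastA orbT.
have ecat : forall E B', path (er E) v1 (A ++ m :: B') = path (er E) v1 (rcons A m) && path (er E) m B'.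
  by move=> E B'; rewrite cat_path rcons_path /= andbA.
case: B pB mB Hlast U Hmax => [|y B] pB mB Hlast U Hmax.
  case/orP: seg1 => /andP[/andP[/andP[p _] _] _]; [left|right]; by rewrite ecat p.
move: pB => /= /andP[emy pB].
move: mB; rewrite inE negb_or => /andP[my mB].
have hy : y != m by rewrite eq_sym.
have yin := er2_in2 emy.
have Hm : m <= v1 by apply: Hmax; rewrite !inE mem_cat inE eqxx !orbT.
have Hl : m <= last v1 (A ++ m :: y :: B) by apply: Hlast; rewrite mem_cat inE eqxx orbT.
case/orP: seg1 => /andP[/andP[/andP[p vi] li] _].
  case/orP: yin => yi.
    have /andP[ps' _] := stay h1 h2 hI pB yi hy mB.
    left; rewrite ecat p /= ps' andbT.
    move: emy => /orP[//|E]; have /andP[a b] := h2 E.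
    have [_ y2] := edge_mem (P := fun z => z \in X2) a b.
    by move: hy; rewrite (hI yi y2) eqxx.
  by move: v1m; rewrite eqn_leq (hm vi) Hm.
case/orP: yin => yi; last first.
  have pB2 : path (er2 E2 E1) y B by rewrite path_er2C.
  have /andP[ps' _] := stay h2 h1 hI' pB2 yi hy mB.
  right; rewrite ecat p /= ps' andbT.
  move: emy => /orP[E|//]; have /andP[a b] := h1 E.
  have [_ y1] := edge_mem (P := fun z => z \in X1) a b.
  by move: hy; rewrite (hI y1 yi) eqxx.
exfalso.
have /andP[_ allB] := stay h1 h2 hI pB yi hy mB.
have ly : last y B \in X1 by apply: (last_in (P := fun z => z \in X1)).
have lyne : last y B != m.
  apply: (last_in (P := fun z => z != m)) => //; apply/allP => z zB; apply: contraNneq mB => <-; exact: zB.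
move: Hl; rewrite last_cat /= => Hl.
by move: lyne; rewrite eqn_leq (hm ly) Hl.
Qed.
End Glue.


Lemma forb_unpack F v1 s : forbidden F (v1 :: s) ->
  [/\ uniq (v1 :: s), path (er F) v1 s, 3 <= size s,
      (forall x, x \in v1 :: s -> x <= v1) &
      ((forall x, x \in s -> x <= last v1 s) /\
      nth 0 (v1 :: s) (size s).-1 < nth 0 s 0)].
Proof.
case=> /andP[U P] [sz [hmax [hlast hlt]]].
split=> //.
- move=> x xs; rewrite /= in hmax; rewrite hmax; exact: bigmax_ge.
split.
- move=> x xs; move: hlast => /=.
  have -> : nth 0 (v1 :: s) (size s) = last v1 s.
    by rewrite -[size s]/((size (v1 :: s)).-1) nth_last.
  by move=> ->; exact: bigmax_ge.
- by move: hlt; rewrite /=; case: s {U P sz hmax hlast} => //.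
Qed.

Lemma forb_transfer F F' v1 s : forbidden F (v1 :: s) -> path (er F') v1 s ->
  forbidden F' (v1 :: s).
Proof.
case=> /andP[U P] rest P'; split=> //; by rewrite /is_path U.
Qed.

Lemma edge_in_V V F x y : edges_of_KV V F -> edge_of x y \in F -> (x \in V) /\ (y \in V).
Proof.
move=> kv e; have [_ a b] := kv _ e.
exact: (edge_mem (P := fun z => z \in V)).
Qed.

Lemma path_in_V V F x s : edges_of_KV V F -> path (er F) x s -> s != [::] ->
  all (fun z => z \in V) (x :: s).
Proof.
move=> kv; elim: s x => [//|y s IH] x /= /andP[e p] _.
have [-> yV] := edge_in_V kv e.
case: s IH p => [|z s] IH p; first by rewrite /= yV.
by have := IH y p isT.
Qed.

Lemma noab V F v1 s : edges_of_KV V F -> forbidden F (v1 :: s) ->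
  path (fun x y => er F x y && (edge_of x y != (fmin V, fmax V))) v1 s.
Proof.
move=> kv /forb_unpack [U P sz hmax [hlast hlt]].
have sne : s != [::] by case: s sz {U P hmax hlast hlt}.
have allV := path_in_V kv P sne.
have inV z : z \in v1 :: s -> z \in V by move=> zs; exact: (allP allV).
have v1V : v1 \in V by apply: inV; rewrite mem_head.
have nb : fmax V \notin s.
  apply/negP => bs.
  have e : v1 = fmax V.
    apply/eqP; rewrite eqn_leq fmax_ge //= hmax //.
    by rewrite inE bs orbT.
  by move: U; rewrite /= e bs.
case: s U P sz hmax hlast hlt allV inV nb sne => [//|v2 s] U P sz hmax hlast hlt allV inV nb _.
move: P => /= /andP[e1 P]; apply/andP; split.
  rewrite e1 /=; apply/negP => /eqP E.
  have v21 : v2 <= v1 by apply: hmax; rewrite !inE eqxx orbT.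
  have v2ne : v2 != v1 by move: U => /= /andP[]; rewrite inE negb_or eq_sym => /andP[].
  have mn : minn v1 v2 = v2 by apply/minn_idPr.
  have v2a : v2 = fmin V by move: E; rewrite /edge_of mn => -[].
  have : nth 0 (v1 :: v2 :: s) (size (v2 :: s)).-1 \in V.
    by apply: inV; apply: mem_nth => /=; lia.
  move/fmin_le; rewrite -v2a /= => h; move: hlt; rewrite /=; lia.
apply: (sub_in_path (P := fun z => z != fmax V)).
- move=> x y xb yb exy /=; apply/andP; split; first exact: exy. apply/negP => /eqP E.
  have : maxn x y = fmax V by move: E; rewrite /edge_of => -[].
  by rewrite /maxn; case: ltnP => _ E0; [move: yb|move: xb]; rewrite -topredE /= E0 eqxx.
- apply/allP => z zs; apply: contraNneq nb => <-; exact: zs.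
- exact: P.
Qed.

Lemma face_node X t1 t2 : adm_nodes (Node X t1 t2) ->
  face (label t1) (edgeset t1) -> face (label t2) (edgeset t2) ->
  face X (edgeset (Node X t1 t2)).
Proof.
move=> H [_ f1] [_ f2].
have H1 := nf_adm1 H; have H2 := nf_adm2 H.
have kv : edges_of_KV X (edgeset (Node X t1 t2)).
  by move=> e /(adm_edge H).
split=> // -[|v1 s] forb; first by case: forb => _ [] .
have pr := noab kv forb.
have P2 : path (er2 (edgeset t1) (edgeset t2)) v1 s.
  apply: sub_path pr => x y /andP[e ne].
  by move: e; rewrite /er edgeset_node (negbTE ne).
have [U _ sz hmax [hlast _]] := forb_unpack forb.
have h1 : forall e, e \in edgeset t1 -> (e.1 \in label t1) && (e.2 \in label t1).
  by move=> e /(adm_edge H1) [_ -> ->].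
have h2 : forall e, e \in edgeset t2 -> (e.1 \in label t2) && (e.2 \in label t2).
  by move=> e /(adm_edge H2) [_ -> ->].
have hI : forall x, x \in label t1 -> x \in label t2 -> x = fmax (label t1).
  by move=> x a b; have := nf_inter H a b.
have hm : forall x, x \in label t1 -> x <= fmax (label t1).
  by move=> x; exact: fmax_ge.
have ne : s != [::] by case: s sz {U P2 pr hmax hlast forb}.
case: (glue h1 h2 hI hm U P2 ne hmax hlast) => p.
  by apply: (f1 (v1 :: s)); exact: forb_transfer forb p.
by apply: (f2 (v1 :: s)); exact: forb_transfer forb p.
Qed.

Lemma face_leaf X : #|` X| = 2 -> face X (edgeset (Leaf X)).
Proof.
move=> H.
have kv : edges_of_KV X (edgeset (Leaf X)).
  move=> e; rewrite edgeset_leaf => /eqP -> /=.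
  have [y yX _] := card2_other 0 (eq_leq (esym H)).
  split.
  - by apply: fmin_lt_fmax; rewrite H.
  - exact: fmin_mem yX.
  - exact: fmax_mem yX.
split=> // -[|v1 s] forb; first by case: forb => _ [].
have pr := noab kv forb.
have [_ _ sz _ _] := forb_unpack forb.
case: s pr sz {forb} => [//|y s] /= /andP[/andP[e ne] _] _.
by move: e ne; rewrite /er edgeset_leaf => ->.
Qed.

Lemma face_edgeset t : adm_nodes t -> face (label t) (edgeset t).
Proof.
elim: t => [X|X t1 IH1 t2 IH2] H; first exact: face_leaf.
apply: face_node => //; [exact: IH1 (nf_adm1 H)|exact: IH2 (nf_adm2 H)].
Qed.


Lemma cut_lemma t (P : pred nat) : adm_nodes t ->
  (forall e, e \in edgeset t -> e.1 != fmax (label t) -> e.2 != fmax (label t) ->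
     P e.1 = P e.2) ->
  (forall x, x \in label t -> x != fmax (label t) -> P x) \/
  (forall x, x \in label t -> x != fmax (label t) -> ~~ P x).
Proof.
elim: t => [X|X t1 IH1 t2 IH2] H hyp /=.
  have only x : x \in X -> x != fmax X -> x = fmin X.
    by move=> xX; case: (card2_mem H xX) => -> //; rewrite eqxx.
  case: (boolP (P (fmin X))) => Pa; [left|right] => x xX xm; by rewrite (only x xX xm).
have H1 := nf_adm1 H; have H2 := nf_adm2 H.
set m := fmax (label t1).
have mM : m != fmax X by rewrite neq_ltn (nf_mb H).
have aM : fmin X != fmax X by rewrite neq_ltn (ltn_trans (nf_am H) (nf_mb H)).
have am : fmin X != m by rewrite neq_ltn (nf_am H).
have M1 : forall x, x \in label t1 -> x != fmax X.
  by move=> x xX; apply: contraNneq (nf_maxX1 H) => <-.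
have h1 : (forall x, x \in label t1 -> x != fmax (label t1) -> P x) \/
          (forall x, x \in label t1 -> x != fmax (label t1) -> ~~ P x).
  apply: IH1 => // e E _ _; have [_ e1 e2] := adm_edge H1 E.
  by apply: hyp; [rewrite edgeset_node E orbT|exact: M1|exact: M1].
have h2 : (forall x, x \in label t2 -> x != fmax (label t2) -> P x) \/
          (forall x, x \in label t2 -> x != fmax (label t2) -> ~~ P x).
  apply: IH2 => // e E; rewrite (nf_fmax2 H) => a b.
  by apply: hyp => //; rewrite edgeset_node E !orbT.
have link : P (fmin X) = P m.
  have E : (fmin X, m) \in edgeset t1 by rewrite -(nf_fmin1 H); exact: root_edge.
  by apply: (hyp (fmin X, m)) => //; rewrite edgeset_node E orbT.
have a1 : fmin X \in label t1 := nf_minX1 H.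
have m2 : m \in label t2 := nf_m2 H.
have m2M : m != fmax (label t2) by rewrite (nf_fmax2 H).
have split_x x : x \in X -> x != fmax X ->
   (x \in label t1) && (x != m) || (x \in label t2) && (x != fmax (label t2)).
  move=> xX xM; case/orP: (nf_cover H xX) => xi.
    case: (eqVneq x m) => [->|xm]; last by rewrite xi.
    by rewrite m2 m2M orbT.
  by rewrite xi (nf_fmax2 H) xM orbT.
case: h1 => h1; case: h2 => h2.
- left => x xX xM; case/orP: (split_x x xX xM) => /andP[]; [exact: h1|exact: h2].
- exfalso; have := h1 _ a1 am; have := h2 _ m2 m2M; by rewrite link => /negbTE ->.
- exfalso; have := h1 _ a1 am; have := h2 _ m2 m2M; by rewrite link => ->.
- right => x xX xM; case/orP: (split_x x xX xM) => /andP[]; [exact: h1|exact: h2].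
Qed.

Lemma restr1 X t1 t2 e : adm_nodes (Node X t1 t2) ->
  (e \in edgeset t1) = [&& e \in edgeset (Node X t1 t2), e.1 \in label t1 & e.2 \in label t1].
Proof.
move=> H; have H1 := nf_adm1 H; have H2 := nf_adm2 H.
apply/idP/idP.
  by move=> E; have [_ -> ->] := adm_edge H1 E; rewrite edgeset_node E orbT.
case/and3P; rewrite edgeset_node => /or3P[/eqP ->|//|E] a b.
  by move: b (nf_maxX1 H) => /= ->.
have [lt c d] := adm_edge H2 E.
have := nf_inter H a c; have := nf_inter H b d; lia.
Qed.

Lemma restr2 X t1 t2 e : adm_nodes (Node X t1 t2) ->
  (e \in edgeset t2) = [&& e \in edgeset (Node X t1 t2), e.1 \in label t2 & e.2 \in label t2].
Proof.
move=> H; have H1 := nf_adm1 H; have H2 := nf_adm2 H.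
apply/idP/idP.
  by move=> E; have [_ -> ->] := adm_edge H2 E; rewrite edgeset_node E !orbT.
case/and3P; rewrite edgeset_node => /or3P[/eqP ->|E|//] a b.
  by move: a (nf_minX2 H) => /= ->.
have [lt c d] := adm_edge H1 E.
have := nf_inter H c a; have := nf_inter H d b; lia.
Qed.

Lemma lab2_char X t1 t2 x : adm_nodes (Node X t1 t2) ->
  (x \in label t2) = (x \in X) && ((x \notin label t1) || (x == fmax (label t1))).
Proof.
move=> H; apply/idP/idP.
  move=> x2; have -> : x \in X by have := nf_sub2 H x2.
  case: (boolP (x \in label t1)) => //= x1.
  by rewrite (nf_inter H x1 x2) eqxx.
case/andP => xX /orP[n1|/eqP ->]; last exact: nf_m2 H.
by case/orP: (nf_cover H xX) => // x1; rewrite x1 in n1.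
Qed.

Lemma a_nb_in1 X t1 t2 u : adm_nodes (Node X t1 t2) ->
  (fmin X, u) \in edgeset (Node X t1 t2) -> u != fmax X -> u \in label t1.
Proof.
move=> H; rewrite edgeset_node => /or3P[/eqP [->]|E|E] ub; first by rewrite eqxx in ub.
  by have [_ _ ->] := adm_edge (nf_adm1 H) E.
by have [_ /= a _] := adm_edge (nf_adm2 H) E; move: (nf_minX2 H); rewrite a.
Qed.

Section Inj.
Variables (X : {fset nat}) (A1 A2 B1 B2 : btree).
Hypothesis HA : adm_nodes (Node X A1 A2).
Hypothesis HB : adm_nodes (Node X B1 B2).
Hypothesis hE : edgeset (Node X A1 A2) = edgeset (Node X B1 B2).

Lemma inj_m : fmax (label A1) <= fmax (label B1).
Proof.
apply: fmax_ge; apply: (a_nb_in1 HB); last by rewrite neq_ltn (nf_mb HA).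
rewrite -hE edgeset_node -(nf_fmin1 HA) root_edge orbT //.
Qed.

Lemma inj_sub (meq : fmax (label A1) = fmax (label B1)) : label A1 `<=` label B1.
Proof.
have HA1 := nf_adm1 HA.
have hyp : forall e, e \in edgeset A1 -> e.1 != fmax (label A1) -> e.2 != fmax (label A1) ->
    (e.1 \in label B1) = (e.2 \in label B1).
  move=> e E n1 n2; have [_ a1 a2] := adm_edge HA1 E.
  have : e \in edgeset (Node X B1 B2) by rewrite -hE edgeset_node E orbT.
  rewrite edgeset_node => /or3P[/eqP Ee|E'|E'].
  - by move: a2 (nf_maxX1 HA); rewrite Ee /= => ->.
  - by have [_ -> ->] := adm_edge (nf_adm1 HB) E'.
  - have [_ b1 b2] := adm_edge (nf_adm2 HB) E'.
    case: (boolP (e.1 \in label B1)) => c1.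
      by move: n1; rewrite meq (nf_inter HB c1 b1) eqxx.
    case: (boolP (e.2 \in label B1)) => c2 //.
    by move: n2; rewrite meq (nf_inter HB c2 b2) eqxx.
have aB : fmin X \in label B1 := nf_minX1 HB.
have aA : fmin X \in label A1 := nf_minX1 HA.
have am : fmin X != fmax (label A1) by rewrite neq_ltn (nf_am HA).
apply/fsubsetP => x xA.
case: (cut_lemma HA1 hyp) => h.
  case: (eqVneq x (fmax (label A1))) => [->|xm]; last exact: h.
  by rewrite meq; exact: nf_m1 HB.
by case/negP: (h _ aA am); exact: aB.
Qed.
End Inj.

Lemma edgeset_inj t1 : forall t2, adm_nodes t1 -> adm_nodes t2 -> label t1 = label t2 ->
  edgeset t1 = edgeset t2 -> t1 = t2.
Proof.
elim: t1 => [X|X A1 IH1 A2 IH2] [Y|Y B1 B2] H1 H2 /= eL eE.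
- by rewrite eL.
- by case: H2 => _ [h _]; move: h; rewrite -eL H1.
- by case: H1 => _ [h _]; move: h; rewrite eL H2.
subst Y.
have mq : fmax (label A1) = fmax (label B1).
  by apply/eqP; rewrite eqn_leq (inj_m H1 H2 eE) (inj_m H2 H1 (esym eE)).
have L1 : label A1 = label B1.
  by apply/eqP; rewrite eqEfsubset (inj_sub H1 H2 eE mq) (inj_sub H2 H1 (esym eE) (esym mq)).
have L2 : label A2 = label B2.
  by apply/fsetP => x; rewrite (lab2_char x H1) (lab2_char x H2) L1.
have E1 : edgeset A1 = edgeset B1.
  by apply/fsetP => e; rewrite (restr1 e H1) (restr1 e H2) eE L1.
have E2 : edgeset A2 = edgeset B2.
  by apply/fsetP => e; rewrite (restr2 e H1) (restr2 e H2) eE L2.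
by rewrite (IH1 B1 (nf_adm1 H1) (nf_adm1 H2) L1 E1) (IH2 B2 (nf_adm2 H1) (nf_adm2 H2) L2 E2).
Qed.


Lemma in_sep (T : choiceType) (A : {fset T}) (P : pred T) x :
  (x \in [fset y in A | P y]) = (x \in A) && P x.
Proof. by rewrite !inE /= andbC. Qed.

Definition pb (P : Prop) : bool := if excluded_middle_informative P then true else false.
Lemma pbP (P : Prop) : reflect P (pb P).
Proof. by rewrite /pb; case: excluded_middle_informative => h; constructor. Qed.

Lemma edge_of_le x y : x <= y -> edge_of x y = (x, y).
Proof. by move=> h; rewrite /edge_of; congr pair; [exact/minn_idPl|exact/maxn_idPr]. Qed.

Lemma face_restrict V W G : face V G -> {subset W <= V} ->
  face W [fset e in G | (e.1 \in W) && (e.2 \in W)].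
Proof.
move=> [kv f] _; split.
  by move=> e; rewrite in_sep => /and3P[eG a b]; have [lt _ _] := kv e eG.
move=> p [/andP[U P] rest]; apply: (f p); split=> //; rewrite /is_path U /=.
case: p P {U rest} => // x s P; apply: sub_path P => u v.
by rewrite in_sep => /andP[].
Qed.

Lemma nrs (s : seq nat) x : nth 0 (rcons s x) (size s) = x.
Proof. by elim: s. Qed.

Lemma nrl (s : seq nat) x : s != [::] -> nth 0 (rcons s x) (size s).-1 = last 0 s.
Proof.
case: s => // y s _ /=; elim: s y => //= z s IH y.
Qed.

Lemma forb_build F u s m : uniq s -> 2 <= size s -> path (er F) u (rcons s m) ->
  (forall x, x \in s -> x < m) -> m < u -> last 0 s < nth 0 s 0 ->
  forbidden F (u :: rcons s m).
Proof.
move=> U sz P hs mu hl.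
have ms : m \notin s by apply/negP => /hs; rewrite ltnn.
have us : u \notin s by apply/negP => /hs; lia.
have le_u : forall x, x \in u :: rcons s m -> x <= u.
  move=> x; rewrite inE mem_rcons inE => /or3P[/eqP->//|/eqP->|/hs h]; [exact: ltnW | exact: ltnW (ltn_trans h mu)].
split.
  rewrite /is_path /= mem_rcons inE negb_or us rcons_uniq ms U andbT /=.
  by rewrite neq_ltn mu orbT.
split; first by rewrite /= size_rcons !ltnS.
split; first by rewrite /=; symmetry; apply: bigmax_seq_eq => //; rewrite mem_head.
split.
  rewrite /= size_rcons; have -> : nth 0 (u :: rcons s m) (size s).+1 = m by exact: nrs.
  symmetry; apply: bigmax_seq_eq.
    by rewrite mem_rcons mem_head.
  by move=> x; rewrite mem_rcons inE => /orP[/eqP->//|/hs/ltnW].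
rewrite /= size_rcons /=.
have ne : s != [::] by case: s sz {U P hs hl ms us le_u}.
have -> : nth 0 (u :: rcons s m) (size s) = last 0 s.
  rewrite -(nrl m ne); case: s ne {U sz P hs hl ms us le_u} => // w q _.
by case: s ne hl {U sz P hs ms us le_u}.
Qed.


Definition nbrs (V : {fset nat}) (G : {fset nat * nat}) :=
  [fset x in V | ((fmin V, x) \in G) && (x != fmax V)].
Definition reachP (G : {fset nat * nat}) (a m w : nat) : Prop :=
  exists q, [/\ path (er G) w q, last w q = a & all (fun z => z < m) (w :: q)].
Definition ext_m V G (c : nat) := if nbrs V G == fset0 then c else fmax (nbrs V G).
Definition ext_R V G c := [fset w in V | pb (reachP G (fmin V) (ext_m V G c) w)].

Section Ext.
Variables (V : {fset nat}) (G : {fset nat * nat}) (c : nat).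
Hypothesis fG : face V G.
Hypothesis cV : c \in V.
Hypothesis ca : c != fmin V.
Hypothesis cb : c != fmax V.

Local Notation a := (fmin V).
Local Notation b := (fmax V).
Local Notation m := (ext_m V G c).
Local Notation R := (ext_R V G c).
Local Notation N := (nbrs V G).

Lemma kvG : edges_of_KV V G.
Proof. by case: fG. Qed.

Lemma L_ac : a < c.
Proof. by rewrite ltn_neqAle eq_sym ca fmin_le. Qed.
Lemma L_cb : c < b.
Proof. by rewrite ltn_neqAle cb fmax_ge. Qed.
Lemma L_bV : b \in V.
Proof. exact: fmax_mem cV. Qed.

Lemma L_N x : (x \in N) = [&& x \in V, (a, x) \in G & x != b].
Proof. by rewrite /nbrs in_sep. Qed.

Lemma L_Nle x : x \in N -> x <= m.
Proof.
move=> xN; rewrite /ext_m; case: eqP => [E|_]; last exact: fmax_ge.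
by move: xN; rewrite E inE.
Qed.

Lemma L_Nm : N != fset0 -> (a, m) \in G /\ m \in N.
Proof.
move=> ne; rewrite /ext_m (negbTE ne).
have [x xN] := fset0Pn _ ne.
have mN := fmax_mem xN; split=> //.
by move: mN; rewrite L_N => /and3P[].
Qed.

Lemma L_mV : m \in V.
Proof.
rewrite /ext_m; case: eqP => [//|/eqP ne].
have [_ mN] := L_Nm ne; move: mN; rewrite /ext_m (negbTE ne) L_N => /and3P[]. done.
Qed.

Lemma L_am : a < m.
Proof.
rewrite /ext_m; case: eqP => [_|/eqP ne]; first exact: L_ac.
have [e _] := L_Nm ne; have [lt _ _] := kvG e.
by move: lt; rewrite /ext_m (negbTE ne).
Qed.

Lemma L_mb : m < b.
Proof.
rewrite /ext_m; case: eqP => [_|/eqP ne]; first exact: L_cb.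
have [_] := L_Nm ne; rewrite L_N /ext_m (negbTE ne) => /and3P[mV _ mb].
by rewrite ltn_neqAle mb fmax_ge.
Qed.

Lemma L_R w : (w \in R) = (w \in V) && pb (reachP G a m w).
Proof. by rewrite /ext_R in_sep. Qed.

Lemma L_Ra : a \in R.
Proof.
rewrite L_R (fmin_mem cV); apply/pbP; exists [::]; split=> //=.
by rewrite L_am.
Qed.

Lemma L_Rlt w : w \in R -> w < m.
Proof. by rewrite L_R => /andP[_ /pbP [q [_ _ /andP[]]]]. Qed.

Lemma L_RV w : w \in R -> w \in V.
Proof. by rewrite L_R => /andP[]. Qed.

Lemma L_closure w u : w \in R -> edge_of w u \in G -> u != m ->
  (u \in R) || ((w == a) && (u == b)).
Proof.
move=> wR e um.
have wV := L_RV wR.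
move: wR; rewrite L_R => /andP[_ /pbP [q [P hl ha]]].
have [_ uV] := edge_in_V kvG e.
case: (ltnP u m) => [ult|uge].
  apply/orP; left; rewrite L_R uV; apply/pbP; exists (w :: q); split=> //=.
    by rewrite /er edge_of_sym e P.
  by rewrite ult.
have umgt : m < u by rewrite ltn_neqAle eq_sym um uge.
case: (eqVneq w a) => [wa|wna].
  case: (eqVneq u b) => [ub|unb]; first by rewrite orbT.
  exfalso.
  have uN : u \in N.
    rewrite L_N uV unb andbT /=.
    by move: e; rewrite wa (edge_of_le (fmin_le uV)).
  by have := L_Nle uN; lia.
exfalso.
have amG : (a, m) \in G.
  apply: (proj1 (L_Nm _)); apply/fset0Pn.
  case/lastP: q P hl ha => [/= _ E|q0 z]; first by rewrite E eqxx in wna.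
  rewrite rcons_path last_rcons => /andP[_ ez] za; subst z.
  set y := last w q0.
  have yin : y \in w :: q0 by exact: mem_last.
  move=> /allP ha; have ym : y < m.
    by apply: ha; move: yin; rewrite !inE mem_rcons inE => /orP[->//|->]; rewrite !orbT.
  have [yV _] := edge_in_V kvG ez.
  exists y; rewrite L_N yV /=; apply/andP; split.
    by move: ez; rewrite /er edge_of_sym (edge_of_le (fmin_le yV)).
  by rewrite neq_ltn (ltn_trans ym L_mb).
move: hl; case: (shortenP P) => q'' P'' U'' S'' hl''.
have q''ne : q'' != [::] by case: q'' {P'' U'' S''} hl'' => //= E; rewrite E eqxx in wna.
apply: (proj2 fG (u :: rcons (w :: q'') m)).
have hs : forall x, x \in w :: q'' -> x < m.
  move=> x; rewrite inE => /orP[/eqP ->|xq].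
    by move: ha => /andP[].
  by move: ha => /andP[_ /allP]; apply; exact: S''.
apply: forb_build => //.
- by case: q'' q''ne {P'' U'' S'' hl'' hs}.
- rewrite /= /er edge_of_sym e /= rcons_path P'' hl'' /=.
  by rewrite /er (edge_of_le (ltnW L_am)).
- rewrite /= hl''; have := fmin_le wV; rewrite leq_eqVlt eq_sym (negbTE wna) //.
Qed.
End Ext.


Definition restrG (G : {fset nat * nat}) (X : {fset nat}) :=
  [fset e in G | (e.1 \in X) && (e.2 \in X)].

Section Split.
Variables (V : {fset nat}) (G : {fset nat * nat}) (c : nat).
Hypothesis fG : face V G.
Hypothesis cV : c \in V.
Hypothesis ca : c != fmin V.
Hypothesis cb : c != fmax V.

Local Notation a := (fmin V).
Local Notation b := (fmax V).
Local Notation m := (ext_m V G c).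
Local Notation R := (ext_R V G c).
Local Notation X1 := (m |` R).
Local Notation X2 := (V `\` R).

Lemma S_in1 x : (x \in X1) = (x == m) || (x \in R).
Proof. by rewrite in_fset1U. Qed.
Lemma S_in2 x : (x \in X2) = (x \notin R) && (x \in V).
Proof. by rewrite in_fsetD. Qed.

Lemma S_mR : m \notin R.
Proof. by apply/negP => /(L_Rlt); rewrite ltnn. Qed.
Lemma S_bR : b \notin R.
Proof.
apply/negP => /(L_Rlt) h.
by have := L_mb G cV cb; lia.
Qed.

Lemma S_X1V x : x \in X1 -> x \in V.
Proof.
rewrite S_in1 => /orP[/eqP ->|]; first by have := L_mV G cV.
exact: L_RV.
Qed.

Lemma S_fmax1 : fmax X1 = m.
Proof.
apply: fmax_eq; first by rewrite S_in1 eqxx.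
move=> x; rewrite S_in1 => /orP[/eqP ->//|/(L_Rlt)]; exact: ltnW.
Qed.

Lemma S_fmin1 : a \in X1.
Proof. by rewrite S_in1 (L_Ra fG cV ca) orbT. Qed.

Lemma S_U : X1 `|` X2 = V.
Proof.
apply/fsetP => x; rewrite in_fsetU S_in2.
apply/idP/idP.
  by case/orP => [/S_X1V|/andP[]].
move=> xV; rewrite xV andbT; case: (boolP (x \in R)) => xR //=.
by rewrite S_in1 xR orbT.
by rewrite orbT.
Qed.

Lemma S_I : X1 `&` X2 = [fset fmax X1].
Proof.
rewrite S_fmax1; apply/fsetP => x; rewrite in_fsetI S_in1 S_in2 in_fset1.
apply/idP/idP.
  by case/andP => /orP[//|->].
move/eqP ->; rewrite eqxx S_mR /=; by have := L_mV G cV.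
Qed.

Lemma S_card1 : 2 <= #|` X1| /\ #|` X1| < #|` V|.
Proof.
split.
  have S : [fset a; m] `<=` X1.
    apply/fsubsetP => x; rewrite in_fset1U in_fset1 S_in1 => /orP[]/eqP ->; last by rewrite eqxx.
    by apply/orP; right; have := L_Ra fG cV ca.
  have := fsubset_leq_card S; rewrite cardfs2.
  by rewrite neq_ltn (L_am fG cV ca).
have S : X1 `<=` V `\ b.
  apply/fsubsetP => x xX; rewrite in_fsetD1 (S_X1V xX) andbT.
  have h2 : x <= m by move: xX; rewrite S_in1 => /orP[/eqP->//|/L_Rlt/ltnW].
  have h1 := L_mb G cV cb.
  by rewrite neq_ltn (leq_ltn_trans h2 h1).
have := fsubset_leq_card S; have := cardfsD1 b V; rewrite (L_bV cV).
move=> h1 h2; rewrite h1 /=; exact: h2.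
Qed.

Lemma S_card2 : 2 <= #|` X2| /\ #|` X2| < #|` V|.
Proof.
split.
  have S : [fset m; b] `<=` X2.
    apply/fsubsetP => x; rewrite in_fset1U in_fset1 => /orP[]/eqP ->; rewrite S_in2.
      by rewrite S_mR (L_mV G cV).
    by rewrite S_bR (L_bV cV).
  have := fsubset_leq_card S; rewrite cardfs2.
  by rewrite neq_ltn (L_mb G cV cb).
have S : X2 `<=` V `\ a.
  apply/fsubsetP => x xX; move: (xX); rewrite in_fsetD1 S_in2 => /andP[xR ->].
  by rewrite andbT; apply: contraNneq xR => ->; exact: L_Ra fG cV ca.
have := fsubset_leq_card S; have := cardfsD1 a V; rewrite (fmin_mem cV).
move=> h1 h2; rewrite h1 /=; exact: h2.
Qed.

Lemma S_edges e : e \in G ->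
  [|| e == (a, b), e \in restrG G X1 | e \in restrG G X2].
Proof.
move=> eG; have [lt x1V x2V] := kvG fG eG.
have ee : edge_of e.1 e.2 = e by rewrite (edge_of_le (ltnW lt)); case: e {eG lt x1V x2V}.
case: (eqVneq e (a, b)) => //= neab.
rewrite /restrG !in_sep eG /=.
case: (boolP (e.1 \in R)) => r1.
  have e12 : edge_of e.1 e.2 \in G by rewrite ee.
  case: (eqVneq e.2 m) => [->|n2]; first by rewrite !S_in1 r1 eqxx !orbT.
  move: (L_closure fG cV ca cb r1 e12 n2) => /orP[r2|/andP[/eqP h1 /eqP h2]]; first by rewrite !S_in1 r1 r2 !orbT.
  by move: neab; rewrite -h1 -h2; case: e {ee e12 eG lt x1V x2V r1 h1 h2 n2} => ? ? ; rewrite eqxx.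
case: (boolP (e.2 \in R)) => r2.
  have ee' : edge_of e.2 e.1 \in G by rewrite edge_of_sym ee.
  have n1 : e.1 != m.
    by rewrite neq_ltn (ltn_trans lt (L_Rlt r2)).
  move: (L_closure fG cV ca cb r2 ee' n1) => /orP[r1'|/andP[/eqP h1 /eqP h2]]; first by rewrite r1' in r1.
  move: lt; rewrite h1 h2 => lt0; have := leq_trans (fmin_le cV) (fmax_ge cV).
  by rewrite leqNgt lt0.
by rewrite !S_in2 r1 r2 x1V x2V !orbT.
Qed.
End Split.


Lemma leaf_sub V G : #|` V| = 2 -> face V G -> G `<=` edgeset (Leaf V).
Proof.
move=> H [kv _]; apply/fsubsetP => e eG; rewrite edgeset_leaf.
have [lt x1 x2] := kv e eG.
have lt0 := fmin_lt_fmax (eq_leq (esym H)).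
have h1 : e.1 = fmin V.
  case: (card2_mem H x1) => // E; have := fmax_ge x2; rewrite -E; lia.
have h2 : e.2 = fmax V.
  case: (card2_mem H x2) => // E; have := fmin_le x1; rewrite -E; lia.
by rewrite [e]surjective_pairing h1 h2.
Qed.

Lemma extend N : forall V G, #|` V| <= N -> 2 <= #|` V| -> face V G ->
  exists T, admissible V T /\ G `<=` edgeset T.
Proof.
elim: N => [|N IH] V G hN h2 fG; first by lia.
case: (eqVneq #|` V| 2) => [e2|n2].
  exists (Leaf V); split; last exact: leaf_sub.
  split=> //; split=> // Y; by rewrite /= inE => /eqP ->.
have [c cV cab] : exists2 c, c \in V & (c != fmin V) && (c != fmax V).
  case: (boolP (V `<=` [fset fmin V; fmax V])) => [S|].
    by have := fsubset_leq_card S; rewrite cardfs2; case: (_ != _); lia.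
  by case/fsubsetPn => x xV; rewrite in_fset1U in_fset1 negb_or => ?; exists x.
case/andP: cab => ca cb.
set X1 := ext_m V G c |` ext_R V G c.
set X2 := V `\` ext_R V G c.
have [c1a c1b] := S_card1 fG cV ca cb.
have [c2a c2b] := S_card2 fG cV ca cb.
have sub1 : {subset X1 <= V} by move=> x hx; have := S_X1V cV hx.
have sub2 : {subset X2 <= V} by move=> x; rewrite S_in2 => /andP[].
have [T1 [[lab1 [_ adm1]] s1]] := IH X1 (restrG G X1) (leq_trans c1b hN) c1a (face_restrict fG sub1).
have [T2 [[lab2 [_ adm2]] s2]] := IH X2 (restrG G X2) (leq_trans c2b hN) c2a (face_restrict fG sub2).
have aR := L_Ra fG cV ca.
have bR := S_bR G cV ca cb.
have Hadm : adm_nodes (Node V T1 T2).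
  rewrite /= lab1 lab2; split=> //.
  split; first by apply/eqP.
  split; first by have := S_fmin1 fG cV ca.
  split; first by rewrite S_in2 aR.
  split; first by rewrite S_in2 bR (L_bV cV).
  split.
    rewrite S_in1 negb_or (negbTE bR) andbT.
    by rewrite eq_sym neq_ltn (L_mb G cV cb).
  split; first by have := S_U G cV.
  split; first by have := S_I G cV.
  by split.
exists (Node V T1 T2); split.
  split=> //; split=> // Y hY; exact: adm_nodes_sub Hadm Y hY.
apply/fsubsetP => e eG; rewrite edgeset_node.
case/or3P: (S_edges fG cV ca cb eG) => [->//|h|h].
  by rewrite (fsubsetP s1 _ h) orbT.
by rewrite (fsubsetP s2 _ h) !orbT.
Qed.

Unset Implicit Arguments. Set Strict Implicit.

Theorem theorem6p4 (V : {fset nat}) (hV : 2 <= #|` V|) :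
  [/\ (forall T, admissible V T -> facet V (edgeset T)),
      (forall T1 T2, admissible V T1 -> admissible V T2 ->
                     edgeset T1 = edgeset T2 -> T1 = T2) &
      (forall F, facet V F -> exists T, admissible V T /\ edgeset T = F)].
Proof.
split.
- move=> T [lab [_ adm]].
  have fT : face V (edgeset T) by rewrite -lab; exact: face_edgeset.
  split=> // G fG sub.
  have [T' [[lab' [_ adm']] s']] := extend (leqnn _) hV fG.
  have eq : edgeset T = edgeset T'.
    apply/eqP; rewrite eqEfcard (fsubset_trans sub s') /=.
    by rewrite (card_edgeset adm) (card_edgeset adm') lab lab'.
  by apply/eqP; rewrite eqEfsubset sub andbT eq.
- move=> T1 T2 [l1 [_ a1]] [l2 [_ a2]] E.
  by apply: edgeset_inj => //; rewrite l1 l2.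
- move=> F [fF maxF].
  have [T [[lab [_ adm]] s]] := extend (leqnn _) hV fF.
  exists T; split; first by split=> //; split=> // Y hY; rewrite -lab; exact: adm_nodes_sub.
  apply: maxF => //; rewrite -lab; exact: face_edgeset.
Qed.
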